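(* Let $c>0$, $m=\log_2 c$ and $r\ge 0$. Then the covering map $F:H^3_1(c/4)\to T^1\mathbb{H}^2(c)$ defined in the context is an isometric immersion. Here $H^3_1(c/4)$ carries the Lorentzian metric induced from $\mathbb{R}^4_2$, and $T^1\mathbb{H}^2(c)$ carries the metric induced by the indefinite generalized Cheeger–Gromoll metric $h_{m,r}$ on $T\mathbb{H}^2(c)$. That is, $F^*(h_{m,r}|_{T^1\mathbb{H}^2(c)})$ equals the canonical metric of $H^3_1(c/4)$.
   Context: $\mathbb{R}^n_\nu$ denotes $\mathbb{R}^n$ with the metric $\langle x,y\rangle=\sum_{i=1}^{n-\nu}x^iy^i-\sum_{j=n-\nu+1}^nx^jy^j$. The anti-de Sitter space is $H^3_1(c)=\{x\in\mathbb{R}^4_2:(x^1)^2+(x^2)^2-(x^3)^2-(x^4)^2=-1/c\}$ with the induced metric. Write $z_1=x^1+\sqrt{-1}x^2$, $z_2=x^3+\sqrt{-1}x^4$, so that $|z_1|^2-|z_2|^2=-1/c$ on $H^3_1(c)$. On $H^3_1(1)$ define the vector fields - $X_1(x)=(x^4,x^3,x^2,x^1)$, - $X_2(x)=(x^3,-x^4,x^1,-x^2)$, - $X_3(x)=(-x^2,x^1,-x^4,x^3)$. The hyperbolic plane is $\mathbb{H}^2(c)=\{x\in\mathbb{R}^3_1:(x^1)^2+(x^2)^2-(x^3)^2=-1/c,\ x^3>0\}$ with the induced Riemannian metric. Its unit tangent bundle is $T^1\mathbb{H}^2(c)=\{(p,v)\in\mathbb{R}^3_1\times\mathbb{R}^3_1: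 p\in\mathbb{H}^2(c),\ \langle v,v\rangle=1,\ \langle p,v\rangle=0\}$, with projection $\pi(p,v)=p$. For $x\in H^3_1(1)$ let $A_x=\sqrt{-1}\begin{pmatrix}\bar z_2&-z_1\\ \bar z_1&-z_2\end{pmatrix}\in\mathrm{SU}(1,1)$. Let $e_1=\begin{pmatrix}0&-\sqrt{-1}\\ \sqrt{-1}&0\end{pmatrix}$, $e_2=\begin{pmatrix}0&1\\1&0\end{pmatrix}$, $e_3=\begin{pmatrix}\sqrt{-1}&0\\0&-\sqrt{-1}\end{pmatrix}$. These form a pseudo-orthonormal basis of $\mathfrak{su}(1,1)$ for $\langle X,Y\rangle=\tfrac12\mathrm{Tr}(XY)$, with $\langle e_3,e_3\rangle=-1$. Identify $\mathfrak{su}(1,1)$ with $\mathbb{R}^3_1$ via coordinates in this basis. Then - $A_xe_1A_x^{-1}=(-\mathrm{Re}(z_1^2+\bar z_2^2),\ -\mathrm{Im}(z_1^2+\bar z_2^2),\ -2\mathrm{Re}(z_1z_2))$, - $A_xe_2A_x^{-1}=(-\mathrm{Im}(z_1^2-\bar z_2^2),\ \mathrm{Re}(z_1^2-\bar z_2^2),\ -2\mathrm{Im}(z_1z_2))$, - $A_xe_3A_x^{-1}=(2\mathrm{Re}(z_1\bar z_2),\ 2\mathrm{Im}(z_1\bar z_2),\ |z_1|^2+|z_2|^2)$. The map $F:H^3_1(c/4)\to T^1\mathbb{H}^2(c)$ is $$F(2x/\sqrt c)=\big(\tfrac1{\sqrt c}A_xe_3A_x^{-1},\ A_xe_1A_x^{-1}\big),\qquad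 x\in H^3_1(1),$$ i.e. the composition of the homothety $2x/\sqrt c\mapsto x$, the map $x\mapsto A_x$, the adjoint representation $\rho:\mathrm{SU}(1,1)\to\mathrm{SO}^+(1,2)$, and $(c_1\,c_2\,c_3)\mapsto(c_3/\sqrt c,c_1)$. Lifts: $T\mathbb{H}^2(c)\subset\mathbb{R}^3_1\times\mathbb{R}^3_1$. For $(p,e)\in T\mathbb{H}^2(c)$ and $X\in T_p\mathbb{H}^2(c)$: - the vertical lift $X^v$ is the velocity at $0$ of $t\mapsto(p,e+tX)$; - the horizontal lift $X^h$ is the velocity at $0$ of $t\mapsto(\gamma(t),V(t))$, where $\gamma(0)=p$, $\dot\gamma(0)=X$, and $V$ is Levi-Civita parallel along $\gamma$ with $V(0)=e$. Indefinite generalized Cheeger–Gromoll metric: for $m\in\mathbb{R}$ and $r\ge0$, $h_{m,r}$ on $T\mathbb{H}^2(c)$ is given at $(p,e)$ by - $h_{m,r}(X^h,Y^h)=\langle X,Y\rangle$, - $h_{m,r}(X^h,Y^v)=0$, - $h_{m,r}(X^v,Y^v)=-\omega^m(\langle X,Y\rangle+r\langle X,e\rangle\langle Y,e\rangle)$, where $\omega=1/(1+\langle e,e\rangle)$. *)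

(* Defs.v *)
From Stdlib Require Import Reals.
Open Scope R_scope.

Record R3 := mk3 { a1 : R; a2 : R; a3 : R }.
Record R4 := mk4 { b1 : R; b2 : R; b3 : R; b4 : R }.

Definition zero3 : R3 := mk3 0 0 0.
Definition zero4 : R4 := mk4 0 0 0 0.
Definition add3 (u v : R3) : R3 := mk3 (a1 u + a1 v) (a2 u + a2 v) (a3 u + a3 v).
Definition scale3 (k : R) (u : R3) : R3 := mk3 (k * a1 u) (k * a2 u) (k * a3 u).
Definition scale4 (k : R) (u : R4) : R4 := mk4 (k * b1 u) (k * b2 u) (k * b3 u) (k * b4 u).

Definition ip3 (u v : R3) : R := a1 u * a1 v + a2 u * a2 v - a3 u * a3 v.
Definition ip4 (u v : R4) : R := b1 u * b1 v + b2 u * b2 v - b3 u * b3 v - b4 u * b4 v.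

(* pairs (p,e) in R^3_1 x R^3_1 and tangent vectors to T H^2 *)
Definition add33 (u v : R3 * R3) : R3 * R3 := (add3 (fst u) (fst v), add3 (snd u) (snd v)).

Definition curve_deriv3 (f : R -> R3) (t : R) (v : R3) : Prop :=
  derivable_pt_lim (fun s => a1 (f s)) t (a1 v) /\
  derivable_pt_lim (fun s => a2 (f s)) t (a2 v) /\
  derivable_pt_lim (fun s => a3 (f s)) t (a3 v).

Definition curve_deriv4 (f : R -> R4) (t : R) (v : R4) : Prop :=
  derivable_pt_lim (fun s => b1 (f s)) t (b1 v) /\
  derivable_pt_lim (fun s => b2 (f s)) t (b2 v) /\
  derivable_pt_lim (fun s => b3 (f s)) t (b3 v) /\
  derivable_pt_lim (fun s => b4 (f s)) t (b4 v).

Definition curve_deriv33 (f : R -> R3 * R3) (t : R) (v : R3 * R3) : Prop :=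
  curve_deriv3 (fun s => fst (f s)) t (fst v) /\ curve_deriv3 (fun s => snd (f s)) t (snd v).

Definition H31 (k : R) (x : R4) : Prop := ip4 x x = - 1 / k.

Definition H2 (c : R) (p : R3) : Prop := ip3 p p = - 1 / c /\ 0 < a3 p.

Definition tangentH2 (p X : R3) : Prop := ip3 p X = 0.

Definition T1H2 (c : R) (p v : R3) : Prop := H2 c p /\ ip3 v v = 1 /\ ip3 p v = 0.

(* orthogonal projection of R^3_1 onto T_p H^2(c) (normal direction p, <p,p> = -1/c) *)
Definition tproj (c : R) (p u : R3) : R3 := add3 u (scale3 (c * ip3 u p) p).

(* Levi-Civita parallel vector field V (with derivative V') along the curve g in H^2(c):
   V is tangent to H^2(c) along g and the tangential part of its ambient derivative vanishes
   (Levi-Civita connection of the induced metric = tangential projection of the flat one). *)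
Definition parallel (c : R) (g V V' : R -> R3) : Prop :=
  forall t, tangentH2 (g t) (V t) /\ curve_deriv3 V t (V' t) /\ tproj c (g t) (V' t) = zero3.

(* xi is the horizontal lift X^h at (p,e): velocity at 0 of t |-> (g t, V t), with g a curve
   in H^2(c), g 0 = p, g'(0) = X, V parallel along g, V 0 = e. *)
Definition hlift (c : R) (p e X : R3) (xi : R3 * R3) : Prop :=
  exists g g' V V' : R -> R3,
    (forall t, H2 c (g t)) /\ (forall t, curve_deriv3 g t (g' t)) /\
    g 0 = p /\ g' 0 = X /\ parallel c g V V' /\ V 0 = e /\
    curve_deriv33 (fun t => (g t, V t)) 0 xi.

(* vertical lift Y^v at (p,e): velocity at 0 of t |-> (p, e + tY) *)
Definition vlift (Y : R3) : R3 * R3 := (zero3, Y).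

Definition omega (e : R3) : R := 1 / (1 + ip3 e e).

Definition log2 (x : R) : R := ln x / ln 2.

(* h_{m,r}(xi, eta) = val at (p,e), where xi = X1^h + Y1^v, eta = X2^h + Y2^v
   (bilinear extension of the defining formulas). Stated for every such decomposition. *)
Definition hmr_val (c m r : R) (p e : R3) (xi eta : R3 * R3) (val : R) : Prop :=
  forall (X1 Y1 X2 Y2 : R3) (h1 h2 : R3 * R3),
    tangentH2 p X1 -> tangentH2 p Y1 -> tangentH2 p X2 -> tangentH2 p Y2 ->
    hlift c p e X1 h1 -> hlift c p e X2 h2 ->
    xi = add33 h1 (vlift Y1) -> eta = add33 h2 (vlift Y2) ->
    val = ip3 X1 X2 - Rpower (omega e) m * (ip3 Y1 Y2 + r * ip3 Y1 e * ip3 Y2 e).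

(* With z1 = x1 + i x2, z2 = x3 + i x4, the coordinates of A_x e_3 A_x^{-1} and
   A_x e_1 A_x^{-1} in the basis (e1,e2,e3) of su(1,1) ~ R^3_1, written out in real form. *)
Definition Ad_e3 (x : R4) : R3 :=
  let x1 := b1 x in let x2 := b2 x in let x3 := b3 x in let x4 := b4 x in
  mk3 (2 * (x1 * x3 + x2 * x4))                         (* 2 Re(z1 conj z2) *)
      (2 * (x2 * x3 - x1 * x4))                         (* 2 Im(z1 conj z2) *)
      (x1 * x1 + x2 * x2 + x3 * x3 + x4 * x4).          (* |z1|^2 + |z2|^2 *)

Definition Ad_e1 (x : R4) : R3 :=
  let x1 := b1 x in let x2 := b2 x in let x3 := b3 x in let x4 := b4 x in
  mk3 (- (x1 * x1 - x2 * x2 + x3 * x3 - x4 * x4))     (* -Re(z1^2 + conj z2^2) *)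
      (- (2 * x1 * x2 - 2 * x3 * x4))                  (* -Im(z1^2 + conj z2^2) *)
      (- 2 * (x1 * x3 - x2 * x4)).                     (* -2 Re(z1 z2) *)

(* F(y) for y in H^3_1(c/4): with x = (sqrt c / 2) y in H^3_1(1),
   F(y) = ( (1/sqrt c) A_x e3 A_x^{-1}, A_x e1 A_x^{-1} ). *)
Definition Fmap (c : R) (y : R4) : R3 * R3 :=
  let x := scale4 (sqrt c / 2) y in (scale3 (1 / sqrt c) (Ad_e3 x), Ad_e1 x).

(* Main.v *)
Require Import Defs.
From Stdlib Require Import Reals Lra.
Open Scope R_scope.


Definition N4 (x : R4) := ip4 x x.
Definition A1 := Ad_e1.
Definition A3 := Ad_e3.
Definition A2 (x : R4) : R3 :=
  let x1 := b1 x in let x2 := b2 x in let x3 := b3 x in let x4 := b4 x in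
  mk3 (-(2*x1*x2+2*x3*x4)) (x1*x1-x2*x2-x3*x3+x4*x4) (-2*(x1*x4+x2*x3)).
Definition dA3 (x u : R4) : R3 :=
  let x1 := b1 x in let x2 := b2 x in let x3 := b3 x in let x4 := b4 x in
  let u1 := b1 u in let u2 := b2 u in let u3 := b3 u in let u4 := b4 u in
  mk3 (2*(u1*x3 + x1*u3 + u2*x4 + x2*u4)) (2*(u2*x3 + x2*u3 - u1*x4 - x1*u4))
      (2*(x1*u1+x2*u2+x3*u3+x4*u4)).
Definition dA1 (x u : R4) : R3 :=
  let x1 := b1 x in let x2 := b2 x in let x3 := b3 x in let x4 := b4 x in
  let u1 := b1 u in let u2 := b2 u in let u3 := b3 u in let u4 := b4 u in
  mk3 (-(2*x1*u1 - 2*x2*u2 + 2*x3*u3 - 2*x4*u4))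
      (-(2*(u1*x2+x1*u2) - 2*(u3*x4+x3*u4)))
      (-2*(u1*x3+x1*u3 - u2*x4 - x2*u4)).
Definition comb (x : R4) (p1 p2 p3 : R) : R4 :=
  let x1 := b1 x in let x2 := b2 x in let x3 := b3 x in let x4 := b4 x in
  mk4 (p1*x4 + p2*x3 - p3*x2) (p1*x3 - p2*x4 + p3*x1)
      (p1*x2 + p2*x1 - p3*x4) (p1*x1 - p2*x2 + p3*x3).
Definition Xf1 (x : R4) := mk4 (b4 x) (b3 x) (b2 x) (b1 x).
Definition Xf2 (x : R4) := mk4 (b3 x) (- b4 x) (b1 x) (- b2 x).
Definition Xf3 (x : R4) := mk4 (- b2 x) (b1 x) (- b4 x) (b3 x).
Definition lin3 (p q r : R) (P Q S : R3) : R3 :=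
  mk3 (p * a1 P + q * a1 Q + r * a1 S) (p * a2 P + q * a2 Q + r * a2 S)
      (p * a3 P + q * a3 Q + r * a3 S).
Definition Yv (x u : R4) : R3 :=
  add3 (dA1 x u) (scale3 (- ip3 (A1 x) (dA3 x u)) (A3 x)).

Lemma decomp x u : ip4 x x = -1 -> ip4 x u = 0 ->
  u = comb x (ip4 u (Xf1 x)) (ip4 u (Xf2 x)) (- ip4 u (Xf3 x)).
Proof.
  intros H1 H2.
  set (c := comb x (ip4 u (Xf1 x)) (ip4 u (Xf2 x)) (- ip4 u (Xf3 x))).
  assert (E1 : -(ip4 x x) * b1 u = b1 c - ip4 x u * b1 x)
    by (subst c; destruct x, u; unfold ip4, comb, Xf1, Xf2, Xf3; simpl; ring).
  assert (E2 : -(ip4 x x) * b2 u = b2 c - ip4 x u * b2 x)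
    by (subst c; destruct x, u; unfold ip4, comb, Xf1, Xf2, Xf3; simpl; ring).
  assert (E3 : -(ip4 x x) * b3 u = b3 c - ip4 x u * b3 x)
    by (subst c; destruct x, u; unfold ip4, comb, Xf1, Xf2, Xf3; simpl; ring).
  assert (E4 : -(ip4 x x) * b4 u = b4 c - ip4 x u * b4 x)
    by (subst c; destruct x, u; unfold ip4, comb, Xf1, Xf2, Xf3; simpl; ring).
  rewrite H1, H2 in *. clearbody c. destruct u, c; simpl in *. f_equal; lra.
Qed.

Lemma g11 x : ip3 (A1 x) (A1 x) = N4 x * N4 x.
Proof. destruct x; unfold ip3, A1, Ad_e1, N4, ip4; simpl; ring. Qed.
Lemma g22 x : ip3 (A2 x) (A2 x) = N4 x * N4 x.
Proof. destruct x; unfold ip3, A2, N4, ip4; simpl; ring. Qed.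
Lemma g33 x : ip3 (A3 x) (A3 x) = - (N4 x * N4 x).
Proof. destruct x; unfold ip3, A3, Ad_e3, N4, ip4; simpl; ring. Qed.
Lemma g12 x : ip3 (A1 x) (A2 x) = 0.
Proof. destruct x; unfold ip3, A1, Ad_e1, A2; simpl; ring. Qed.
Lemma g13 x : ip3 (A1 x) (A3 x) = 0.
Proof. destruct x; unfold ip3, A1, Ad_e1, A3, Ad_e3; simpl; ring. Qed.
Lemma g23 x : ip3 (A2 x) (A3 x) = 0.
Proof. destruct x; unfold ip3, A3, Ad_e3, A2; simpl; ring. Qed.

Lemma dA3_comb x p1 p2 p3 :
  dA3 x (comb x p1 p2 p3) = lin3 (-2*p2) (-2*p1) 0 (A1 x) (A2 x) (A3 x).
Proof. destruct x; unfold dA3, comb, lin3, A1, Ad_e1, A2, A3, Ad_e3; simpl; f_equal; ring. Qed.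
Lemma dA1_comb x p1 p2 p3 :
  dA1 x (comb x p1 p2 p3) = lin3 0 (-2*p3) (-2*p2) (A1 x) (A2 x) (A3 x).
Proof. destruct x; unfold dA1, comb, lin3, A1, Ad_e1, A2, A3, Ad_e3; simpl; f_equal; ring. Qed.
Lemma ip4_comb x p1 p2 p3 q1 q2 q3 :
  ip4 (comb x p1 p2 p3) (comb x q1 q2 q3) = - N4 x * (p1*q1 + p2*q2 - p3*q3).
Proof. destruct x; unfold N4, ip4, comb; simpl; ring. Qed.
Lemma ip3_lin p q r p' q' r' P Q S :
  ip3 (lin3 p q r P Q S) (lin3 p' q' r' P Q S) =
  p*p'*ip3 P P + q*q'*ip3 Q Q + r*r'*ip3 S S
  + (p*q'+q*p') * ip3 P Q + (p*r'+r*p') * ip3 P S + (q*r'+r*q') * ip3 Q S.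
Proof. unfold ip3, lin3; simpl; ring. Qed.
Lemma ip3_P_lin p q r P Q S :
  ip3 P (lin3 p q r P Q S) = p*ip3 P P + q*ip3 P Q + r*ip3 P S.
Proof. unfold ip3, lin3; simpl; ring. Qed.
Lemma ip3_Q_lin p q r P Q S :
  ip3 Q (lin3 p q r P Q S) = p*ip3 P Q + q*ip3 Q Q + r*ip3 Q S.
Proof. unfold ip3, lin3; simpl; ring. Qed.
Lemma lin_add p q r k P Q S :
  add3 (lin3 p q r P Q S) (scale3 k S) = lin3 p q (r + k) P Q S.
Proof. unfold add3, scale3, lin3; simpl; f_equal; ring. Qed.
Lemma ip3_lin_P p q r P Q S :
  ip3 (lin3 p q r P Q S) P = p*ip3 P P + q*ip3 P Q + r*ip3 P S.
Proof. unfold ip3, lin3; simpl; ring. Qed.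

Lemma key x u v : ip4 x x = -1 -> ip4 x u = 0 -> ip4 x v = 0 ->
  ip3 (dA3 x u) (dA3 x v) - ip3 (Yv x u) (Yv x v) = 4 * ip4 u v /\  ip3 (Yv x u) (A1 x) = 0.
Proof.
  intros H1 Hu Hv.
  rewrite (decomp x u H1 Hu), (decomp x v H1 Hv).
  generalize (ip4 u (Xf1 x)) (ip4 u (Xf2 x)) (- ip4 u (Xf3 x)) (ip4 v (Xf1 x))
    (ip4 v (Xf2 x)) (- ip4 v (Xf3 x)); intros p1 p2 p3 q1 q2 q3.
  unfold Yv. rewrite !dA3_comb, !dA1_comb, !ip3_P_lin, !lin_add, ip4_comb.
  rewrite !ip3_lin, ip3_lin_P, !g11, !g22, !g33, !g12, !g13, !g23.
  unfold N4; rewrite H1. split; ring.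
Qed.

Lemma inj x u : ip4 x x = -1 -> ip4 x u = 0 -> dA3 x u = zero3 -> dA1 x u = zero3 -> u = zero4.
Proof.
  intros H1 Hu E3 E1.
  rewrite (decomp x u H1 Hu) in *.
  generalize dependent (ip4 u (Xf1 x)). generalize dependent (ip4 u (Xf2 x)).
  generalize dependent (- ip4 u (Xf3 x)). intros p3 p2 p1 E3 E1.
  rewrite dA3_comb in E3. rewrite dA1_comb in E1.
  assert (F1 := f_equal (ip3 (A1 x)) E3).
  assert (F2 := f_equal (ip3 (A2 x)) E3).
  assert (F3 := f_equal (ip3 (A2 x)) E1).
  rewrite ip3_P_lin in F1. rewrite ip3_Q_lin in F2, F3.
  rewrite !g11, !g22, !g12, !g13, !g23 in *. unfold N4 in *; rewrite H1 in *.
  unfold ip3, zero3 in F1, F2, F3; simpl in *.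
  assert (p1 = 0) by lra. assert (p2 = 0) by lra. assert (p3 = 0) by lra. subst.
  unfold comb, zero4; f_equal; ring.
Qed.


Lemma D_plus f g x lf lg : derivable_pt_lim f x lf -> derivable_pt_lim g x lg ->
  derivable_pt_lim (fun t => f t + g t) x (lf + lg).
Proof. intros; exact (derivable_pt_lim_plus f g x lf lg H H0). Qed.
Lemma D_minus f g x lf lg : derivable_pt_lim f x lf -> derivable_pt_lim g x lg ->
  derivable_pt_lim (fun t => f t - g t) x (lf - lg).
Proof. intros; exact (derivable_pt_lim_minus f g x lf lg H H0). Qed.
Lemma D_mult f g x lf lg : derivable_pt_lim f x lf -> derivable_pt_lim g x lg ->
  derivable_pt_lim (fun t => f t * g t) x (lf * g x + f x * lg).
Proof. intros; exact (derivable_pt_lim_mult f g x lf lg H H0). Qed.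
Lemma D_opp f x lf : derivable_pt_lim f x lf ->
  derivable_pt_lim (fun t => - f t) x (- lf).
Proof. intros; exact (derivable_pt_lim_opp f x lf H). Qed.
Lemma D_const k x : derivable_pt_lim (fun _ => k) x 0.
Proof. exact (derivable_pt_lim_const k x). Qed.
Lemma D_eq f x l l' : derivable_pt_lim f x l -> l = l' -> derivable_pt_lim f x l'.
Proof. intros H ->; exact H. Qed.

Ltac D :=
  lazymatch goal with
  | |- derivable_pt_lim (fun _ => ?k) _ _ => apply D_const
  | |- derivable_pt_lim (fun t => @?f t + @?g t) _ _ => apply (D_plus f g); D
  | |- derivable_pt_lim (fun t => @?f t - @?g t) _ _ => apply (D_minus f g); D
  | |- derivable_pt_lim (fun t => @?f t * @?g t) _ _ => apply (D_mult f g); D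
  | |- derivable_pt_lim (fun t => - @?f t) _ _ => apply (D_opp f); D
  | |- derivable_pt_lim (fun t => @?f t / ?k) _ _ =>
      unfold Rdiv; D
  | |- _ => eassumption
  end.


Lemma tang4 (s : R -> R4) w K : (forall t, ip4 (s t) (s t) = K) -> curve_deriv4 s 0 w ->
  ip4 (s 0) w = 0.
Proof.
  intros H [H1 [H2 [H3 H4]]].
  assert (Hd : derivable_pt_lim (fun t => ip4 (s t) (s t)) 0 (2 * ip4 (s 0) w)).
  { eapply D_eq. unfold ip4. D. unfold ip4. ring. }
  assert (Hc : derivable_pt_lim (fun t => ip4 (s t) (s t)) 0 0).
  { apply (derivable_pt_lim_ext (fun _ => K)). intro; rewrite H; auto. apply D_const. }
  pose proof (uniqueness_limite _ _ _ _ Hd Hc). lra.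
Qed.

Definition DF (c : R) (y w : R4) : R3 * R3 :=
  (scale3 (1 / sqrt c) (dA3 (scale4 (sqrt c / 2) y) (scale4 (sqrt c / 2) w)),
   dA1 (scale4 (sqrt c / 2) y) (scale4 (sqrt c / 2) w)).

Lemma Fderiv c (s : R -> R4) w : curve_deriv4 s 0 w ->
  curve_deriv33 (fun t => Fmap c (s t)) 0 (DF c (s 0) w).
Proof.
  intros [H1 [H2 [H3 H4]]].
  unfold curve_deriv33, curve_deriv3, DF, Fmap; simpl.
  repeat split; (eapply D_eq; [ unfold Rdiv; D | unfold Rdiv; ring ]).
Qed.

Lemma R3eq (u v : R3) : a1 u = a1 v -> a2 u = a2 v -> a3 u = a3 v -> u = v.
Proof. destruct u, v; simpl; intros -> -> ->; reflexivity. Qed.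

Lemma cd33_uniq f v v' : curve_deriv33 f 0 v -> curve_deriv33 f 0 v' -> v = v'.
Proof.
  intros [[A1' [A2' A3']] [B1 [B2 B3]]] [[C1 [C2 C3]] [E1 [E2 E3]]].
  destruct v as [v1 v2], v' as [w1 w2]; simpl in *. f_equal; apply R3eq;
  eapply uniqueness_limite; eassumption.
Qed.

Lemma cd3_uniq f v v' : curve_deriv3 f 0 v -> curve_deriv3 f 0 v' -> v = v'.
Proof.
  intros [C1 [C2 C3]] [E1 [E2 E3]]. apply R3eq; eapply uniqueness_limite; eassumption.
Qed.

Lemma hlift_char c p e X h : hlift c p e X h ->
  h = (X, scale3 (c * ip3 e X) p).
Proof.
  intros (g & g' & V & V' & Hg & Hg' & Hg0 & Hg'0 & Hpar & HV0 & Hd).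
  destruct (Hpar 0) as [_ [HV' Hpr]].
  assert (Hfst : fst h = X).
  { subst. apply (cd3_uniq g); [apply Hd | apply Hg']. }
  assert (Hsnd : snd h = V' 0).
  { apply (cd3_uniq V); [apply Hd | apply HV']. }
  assert (Hz : ip3 (g' 0) (V 0) + ip3 (g 0) (V' 0) = 0).
  { destruct (Hg' 0) as [G1 [G2 G3]]. destruct HV' as [W1 [W2 W3]].
    assert (Hd1 : derivable_pt_lim (fun t => ip3 (g t) (V t)) 0
                   (ip3 (g' 0) (V 0) + ip3 (g 0) (V' 0))).
    { eapply D_eq. unfold ip3. D. unfold ip3. ring. }
    assert (Hc : derivable_pt_lim (fun t => ip3 (g t) (V t)) 0 0).
    { apply (derivable_pt_lim_ext (fun _ => 0)). intro z.
      destruct (Hpar z) as [Ht _]. unfold tangentH2 in Ht. auto. apply D_const. }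
    apply (uniqueness_limite _ _ _ _ Hd1 Hc). }
  rewrite Hg0, Hg'0, HV0 in Hz. rewrite Hg0 in Hpr.
  destruct h as [h1 h2]; simpl in *. subst h1 h2. f_equal.
  set (W := V' 0) in *.
  assert (Ht : ip3 W p = - ip3 e X).
  { clear -Hz. destruct W, p, e, X; unfold ip3 in *; simpl in *. lra. }
  unfold tproj, zero3, add3, scale3 in Hpr. rewrite Ht in Hpr.
  destruct W as [w1 w2 w3], p as [p1 p2 p3].
  simpl in *. injection Hpr; intros Q3 Q2 Q1.
  unfold scale3; simpl. f_equal; lra.
Qed.


Ltac elimq c :=
  let q := fresh "q" in let Hq := fresh "Hq" in let Hq0 := fresh "Hq0" in
  assert (Hq : sqrt c * sqrt c = c) by (apply sqrt_sqrt; lra);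
  assert (Hq0 : 0 < sqrt c) by (apply sqrt_lt_R0; lra);
  set (q := sqrt c) in *; clearbody q; subst c.

Lemma ip3_comm u v : ip3 u v = ip3 v u.
Proof. unfold ip3; ring. Qed.
Lemma ip3_scale a b u v : ip3 (scale3 a u) (scale3 b v) = a * b * ip3 u v.
Proof. unfold ip3, scale3; simpl; ring. Qed.
Lemma ip4_scale a b u v : ip4 (scale4 a u) (scale4 b v) = a * b * ip4 u v.
Proof. unfold ip4, scale4; simpl; ring. Qed.

Lemma Rpow_half c : 0 < c -> Rpower (1 / (1 + 1)) (log2 c) = 1 / c.
Proof.
  intro Hc. unfold Rpower, log2.
  replace (1 / (1 + 1)) with (/ 2) by field.
  rewrite ln_Rinv by lra.
  assert (H2 : 0 < ln 2). { rewrite <- ln_1. apply ln_increasing; lra. }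
  replace (ln c / ln 2 * - ln 2) with (- ln c) by (field; lra).
  rewrite exp_Ropp, exp_ln by lra. field; lra.
Qed.

Lemma Nx c y : 0 < c -> H31 (c / 4) y ->
  ip4 (scale4 (sqrt c / 2) y) (scale4 (sqrt c / 2) y) = -1.
Proof.
  intros Hc H. unfold H31 in H. rewrite ip4_scale, H.
  assert (Hq : sqrt c * sqrt c = c) by (apply sqrt_sqrt; lra).
  clear Hq. elimq c. field; lra.
Qed.

Lemma part1 c y : 0 < c -> H31 (c / 4) y -> T1H2 c (fst (Fmap c y)) (snd (Fmap c y)).
Proof.
  intros Hc H. pose proof (Nx c y Hc H) as HN.
  assert (Hq : sqrt c * sqrt c = c) by (apply sqrt_sqrt; lra).
  assert (Hq0 : 0 < sqrt c) by (apply sqrt_lt_R0; lra).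
  unfold Fmap; simpl. set (x := scale4 (sqrt c / 2) y) in *.
  change (Ad_e3 x) with (A3 x). change (Ad_e1 x) with (A1 x).
  split; [split|split].
  - rewrite ip3_scale, g33. unfold N4; rewrite HN. clear -Hc. elimq c. field; lra.
  - clearbody x. destruct x as [x1 x2 x3 x4]. unfold ip4 in HN.
    unfold A3, Ad_e3; simpl in *. apply Rmult_lt_0_compat.
    + apply Rdiv_lt_0_compat; lra.
    + pose proof (Rle_0_sqr x1); pose proof (Rle_0_sqr x2); unfold Rsqr in *. lra.
  - rewrite g11; unfold N4; rewrite HN; ring.
  - replace (A1 x) with (scale3 1 (A1 x)) by (unfold scale3; destruct (A1 x); simpl; f_equal; ring).
    rewrite ip3_scale, ip3_comm, g13. ring.
Qed.

Theorem theorem2 (c m r : R) (Hc : 0 < c) (Hm : m = log2 c) (Hr : 0 <= r) :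
  (* F maps H^3_1(c/4) into T^1 H^2(c) *)
  (forall y : R4, H31 (c / 4) y -> T1H2 c (fst (Fmap c y)) (snd (Fmap c y))) /\
  (* isometry: h_{m,r}(dF w1, dF w2) = <w1, w2> for tangent vectors w1, w2 of H^3_1(c/4) *)
  (forall (y w1 w2 : R4) (s1 s2 : R -> R4) (xi1 xi2 : R3 * R3),
     (forall t, H31 (c / 4) (s1 t)) -> s1 0 = y -> curve_deriv4 s1 0 w1 ->
     (forall t, H31 (c / 4) (s2 t)) -> s2 0 = y -> curve_deriv4 s2 0 w2 ->
     curve_deriv33 (fun t => Fmap c (s1 t)) 0 xi1 ->
     curve_deriv33 (fun t => Fmap c (s2 t)) 0 xi2 ->
     hmr_val c m r (fst (Fmap c y)) (snd (Fmap c y)) xi1 xi2 (ip4 w1 w2)) /\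
  (* immersion: dF is injective on tangent vectors *)
  (forall (y w : R4) (s : R -> R4),
     (forall t, H31 (c / 4) (s t)) -> s 0 = y -> curve_deriv4 s 0 w ->
     curve_deriv33 (fun t => Fmap c (s t)) 0 (zero3, zero3) -> w = zero4).
Proof.
  assert (Hq : sqrt c * sqrt c = c) by (apply sqrt_sqrt; lra).
  assert (Hq0 : 0 < sqrt c) by (apply sqrt_lt_R0; lra).
  split; [|split].
  - intros y H; apply part1; auto.
  - intros y w1 w2 s1 s2 xi1 xi2 Hs1 Hs10 Hd1 Hs2 Hs20 Hd2 Hxi1 Hxi2.
    assert (T1 : ip4 y w1 = 0) by (rewrite <- Hs10; exact (tang4 s1 w1 _ Hs1 Hd1)).
    assert (T2 : ip4 y w2 = 0) by (rewrite <- Hs20; exact (tang4 s2 w2 _ Hs2 Hd2)).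
    assert (Hy : H31 (c / 4) y) by (rewrite <- Hs10; apply Hs1).
    pose proof (part1 c y Hc Hy) as [_ [Hee _]].
    pose proof (Nx c y Hc Hy) as HN.
    assert (E1 : xi1 = DF c y w1).
    { apply (cd33_uniq _ _ _ Hxi1). rewrite <- Hs10. apply Fderiv; auto. }
    assert (E2 : xi2 = DF c y w2).
    { apply (cd33_uniq _ _ _ Hxi2). rewrite <- Hs20. apply Fderiv; auto. }
    subst xi1 xi2.
    unfold hmr_val. intros X1 Y1 X2 Y2 h1 h2 tX1 tY1 tX2 tY2 Hh1 Hh2 F1 F2.
    apply hlift_char in Hh1. apply hlift_char in Hh2. subst h1 h2.
    unfold DF, Fmap, add33, vlift in F1, F2 |- *; cbn [fst snd] in *.
    set (k := sqrt c / 2) in *. set (x := scale4 k y) in *.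
    set (u1 := scale4 k w1) in *. set (u2 := scale4 k w2) in *.
    change (Ad_e3 x) with (A3 x) in *. change (Ad_e1 x) with (A1 x) in *.
    assert (Hu1 : ip4 x u1 = 0) by (unfold x, u1; rewrite ip4_scale, T1; ring).
    assert (Hu2 : ip4 x u2 = 0) by (unfold x, u2; rewrite ip4_scale, T2; ring).
    pose proof (f_equal fst F1) as F1a; pose proof (f_equal snd F1) as F1b;
    pose proof (f_equal fst F2) as F2a; pose proof (f_equal snd F2) as F2b;
    cbn [fst snd] in F1a, F1b, F2a, F2b.
    assert (EX1 : X1 = scale3 (1 / sqrt c) (dA3 x u1)).
    { rewrite F1a. unfold add3, zero3; destruct X1; simpl; f_equal; ring. }
    assert (EX2 : X2 = scale3 (1 / sqrt c) (dA3 x u2)).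
    { rewrite F2a. unfold add3, zero3; destruct X2; simpl; f_equal; ring. }
    assert (EY : forall X Y u, X = scale3 (1 / sqrt c) (dA3 x u) ->
              dA1 x u = add3 (scale3 (c * ip3 (A1 x) X) (scale3 (1 / sqrt c) (A3 x))) Y ->
              Y = Yv x u).
    { intros X Y u -> HY. unfold Yv. rewrite HY.
      destruct Y, (A1 x), (A3 x), (dA3 x u); unfold add3, scale3, ip3; simpl.
      clear -Hc. elimq c. f_equal; field; lra. }
    assert (EY1 : Y1 = Yv x u1) by (apply (EY X1); auto).
    assert (EY2 : Y2 = Yv x u2) by (apply (EY X2); auto).
    destruct (key x u1 u2 HN Hu1 Hu2) as [K1 K2].
    destruct (key x u2 u1 HN Hu2 Hu1) as [_ K3].
    rewrite EY1, EY2, EX1, EX2, ip3_scale, K2, K3.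
    change (snd (Fmap c y)) with (A1 x) in Hee.
    unfold omega. rewrite Hee, Hm, Rpow_half by auto.
    replace (ip3 (dA3 x u1) (dA3 x u2)) with (ip3 (Yv x u1) (Yv x u2) + 4 * ip4 u1 u2) by lra.
    unfold u1, u2; rewrite ip4_scale. unfold k. clear -Hc. elimq c. field; lra.
  - intros y w s Hs Hs0 Hd Hxi.
    assert (Hy : H31 (c / 4) y) by (rewrite <- Hs0; apply Hs).
    assert (T : ip4 y w = 0) by (rewrite <- Hs0; exact (tang4 s w _ Hs Hd)).
    pose proof (Nx c y Hc Hy) as HN.
    assert (E : DF c y w = (zero3, zero3)).
    { symmetry. apply (cd33_uniq _ _ _ Hxi). rewrite <- Hs0. apply Fderiv; auto. }
    pose proof (f_equal fst E) as Eb; pose proof (f_equal snd E) as Ea.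
    unfold DF in Ea, Eb; cbn [fst snd] in Ea, Eb.
    set (k := sqrt c / 2) in *.
    assert (Hu : ip4 (scale4 k y) (scale4 k w) = 0) by (rewrite ip4_scale, T; ring).
    assert (Eb' : dA3 (scale4 k y) (scale4 k w) = zero3).
    { destruct (dA3 (scale4 k y) (scale4 k w)) as [d1 d2 d3]; unfold scale3, zero3 in *;
      simpl in Eb. injection Eb; intros G3 G2 G1.
      assert (Hi : 1 / sqrt c <> 0) by (apply Rgt_not_eq, Rdiv_lt_0_compat; lra).
      f_equal; [apply (Rmult_eq_reg_l (1 / sqrt c)) | apply (Rmult_eq_reg_l (1 / sqrt c)) |
                apply (Rmult_eq_reg_l (1 / sqrt c))]; auto; rewrite ?Rmult_0_r; auto. }
    pose proof (inj _ _ HN Hu Eb' Ea) as Z.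
    unfold scale4, zero4 in Z. destruct w; simpl in Z. injection Z; intros Z4 Z3 Z2 Z1.
    assert (Hk : k <> 0) by (unfold k; lra).
    unfold zero4; f_equal;
      [apply (Rmult_eq_reg_l k) | apply (Rmult_eq_reg_l k) | apply (Rmult_eq_reg_l k) |
       apply (Rmult_eq_reg_l k)]; auto; rewrite ?Rmult_0_r; auto.
Qed.
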